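(* Let $A$ be a countable subset of $\mathbb{R}^d$. Then there exists a lattice $D$ in $\mathbb{R}^d$ such that $D\cap\mathrm{span}_{\mathbb{Q}}(A)=\{0\}$ and $D^\circ\cap\mathrm{span}_{\mathbb{Q}}(A)=\{0\}$, where $D^\circ=\{x\in\mathbb{R}^d:\langle y,x\rangle\in\mathbb{Z}\text{ for all }y\in D\}$ is the dual lattice.
   Context: A lattice in $\mathbb{R}^d$ is a discrete cocompact subgroup. $\mathrm{span}_{\mathbb{Q}}(A)$ is the set of finite rational linear combinations of elements of $A$. *)

(* Defs.v *)
(* R^d is 'rV[R]_d for R : realType. *)
From HB Require Import structures.
From mathcomp Require Import all_boot all_order all_algebra.
From mathcomp Require Import all_classical all_reals all_analysis.
Set Implicit Arguments. Unset Strict Implicit. Unset Printing Implicit Defensive.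
Import Order.TTheory GRing.Theory Num.Theory.
Import numFieldNormedType.Exports.
Local Open Scope classical_set_scope.
Local Open Scope ring_scope.

Definition inner (R : realType) (d : nat) (x y : 'rV[R]_d) : R :=
  \sum_(i < d) x ord0 i * y ord0 i.

Definition is_subgroup (R : realType) (d : nat) (D : set 'rV[R]_d) : Prop :=
  D 0 /\ (forall x y, D x -> D y -> D (x - y)).

Definition is_discrete (R : realType) (d : nat) (D : set 'rV[R]_d) : Prop :=
  forall x, D x -> exists2 e : R, 0 < e &
    forall y, D y -> `|y - x| < e -> y = x.

Definition is_cocompact (R : realType) (d : nat) (D : set 'rV[R]_d) : Prop :=
  exists K : set 'rV[R]_d, compact K /\
    forall x, exists k, exists y, K k /\ D y /\ x = k + y.

Definition is_lattice (R : realType) (d : nat) (D : set 'rV[R]_d) : Prop :=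
  [/\ is_subgroup D, is_discrete D & is_cocompact D].

Definition dual_lattice (R : realType) (d : nat) (D : set 'rV[R]_d)
  : set 'rV[R]_d :=
  [set x | forall y, D y -> exists z : int, inner y x = z%:~R].

Definition spanQ (R : realType) (d : nat) (A : set 'rV[R]_d) : set 'rV[R]_d :=
  [set x | exists s : seq (rat * 'rV[R]_d),
     (forall p, p \in s -> A p.2) /\
     x = \sum_(p <- s) (ratr p.1) *: p.2].

(* Main.v *)
Require Import Defs.
From HB Require Import structures.
From mathcomp Require Import all_boot all_order all_algebra.
From mathcomp Require Import all_classical all_reals all_analysis.
Import Order.TTheory GRing.Theory Num.Theory.
Import numFieldNormedType.Exports.
Local Open Scope classical_set_scope.
Local Open Scope ring_scope.
Set Implicit Arguments. Unset Strict Implicit.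

Lemma entry_le (R : realType) d (x : 'rV[R]_d) i : `|x ord0 i| <= `|x|.
Proof.
have /mapP[j Hj ->] : `|x ord0 i| \in [seq `|x k.1 k.2| | k : 'I_1 * 'I_d].
  by apply/mapP; exists (ord0, i) => //=; rewrite mem_enum.
by rewrite [leRHS]/Num.norm /= mx_normrE; apply/bigmax_geP; right => /=; exists j.
Qed.

Lemma exists_avoid (R : realType) (S : set R) : countable S ->
  exists t : R, 0 < t /\ ~ S t.
Proof.
move=> cS; apply: contrapT => H.
have sub : `]0, 1[%classic `<=` S.
  move=> x; rewrite /= in_itv /= => /andP[x0 x1].
  by apply: contrapT => nSx; apply: H; exists x.
have := countable_lebesgue_measure0 (sub_countable (subset_card_le sub) cS).
rewrite lebesgue_measure_itv /= lte_fin ltr01 /=.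
by move=> /eqP; rewrite -EFinB subr0 eqe oner_eq0.
Qed.

Definition badset (R : realType) d (A : set 'rV[R]_d) : set R :=
  [set r | exists v i (z : int), spanQ A v /\
     (r = v ord0 i / z%:~R \/ r = z%:~R / v ord0 i)].

Lemma badset_countable (R : realType) d (A : set 'rV[R]_d) :
  countable A -> countable (badset A).
Proof.
move=> /countable_injP[f injf].
pose h := pinv_ (fun=> 0 : 'rV[R]_d) A f.
have hf : forall a, A a -> h (f a) = a.
  by move=> a Aa; rewrite /h (@pinvKV _ _ (fun=> 0 : 'rV[R]_d) A f injf) // inE.
pose G := fun (u : seq (rat * nat) * 'I_d * int * bool) =>
  let: (s, i, z, b) := u in
  let v := \sum_(p <- s) ratr p.1 *: h p.2 in
  if b then v ord0 i / z%:~R else z%:~R / v ord0 i.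
apply: (@sub_countable _ _ _ (G @` setT)); last first.
  exact: (sub_countable (card_image_le G setT) (countableP _)).
apply: subset_card_le => r [v [i [z [[s [sA ->]] hr]]]].
pose s' := [seq (p.1, f p.2) | p <- s].
have Es : \sum_(p <- s') ratr p.1 *: h p.2 = \sum_(p <- s) ratr p.1 *: p.2.
  rewrite big_map; apply: eq_big_seq => p ps /=.
  by rewrite hf //; apply: sA.
case: hr => ->.
  by exists (s', i, z, true) => //=; rewrite Es.
by exists (s', i, z, false) => //=; rewrite Es.
Qed.
From mathcomp Require Import zify ring lra.
Lemma int_small (R : realType) (z : int) : `|z%:~R : R| < 1 -> z = 0.
Proof.
rewrite -intr_norm ltrz1 => h.
have h0 := normr_ge0 z.
by apply/eqP; rewrite -normr_le0 -ltzD1.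
Qed.

Unset Implicit Arguments.
Set Strict Implicit.

Theorem lemma6p1 (R : realType) (d : nat) (A : set 'rV[R]_d) :
  countable A ->
  exists D : set 'rV[R]_d,
    [/\ is_lattice D,
        D `&` spanQ A = [set 0] &
        dual_lattice D `&` spanQ A = [set 0]].
Proof.
move=> cA.
have [t [t0 tnb]] := exists_avoid (badset_countable cA).
have tn0 : t != 0 by rewrite gt_eqF.
pose D := [set x : 'rV[R]_d | forall i, exists z : int, x ord0 i = t * z%:~R].
have D0 : D 0 by move=> i; exists 0; rewrite mxE mulr0.
have S0 : spanQ A 0 by exists [::]; split => //; rewrite big_nil.
exists D; split.
- split.
  + split => // x y Dx Dy i.
    have [zx ex] := Dx i; have [zy ey] := Dy i.
    by exists (zx - zy); rewrite !mxE ex ey intrB mulrBr.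
  + move=> x Dx; exists t => // y Dy yx.
    apply/rowP => j.
    have [zx ex] := Dx j; have [zy ey] := Dy j.
    have : `|(y - x) ord0 j| < t by apply: le_lt_trans (entry_le _ _) yx.
    rewrite !mxE ex ey -mulrBr -intrB normrM gtr0_norm // -{2}(mulr1 t).
    rewrite ltr_pM2l // => /int_small /eqP; rewrite subr_eq0 => /eqP ->.
    by [].
  + exists [set v : 'rV[R]_d | forall i, (`[0, t]%classic : set R) (v ord0 i)].
    split.
      by apply: (@rV_compact _ _ (fun=> `[0, t]%classic)) => _; exact: segment_compact.
    move=> x.
    pose y := \row_i (t * (Num.floor (x ord0 i / t))%:~R).
    exists (x - y), y; split; last split; last by rewrite subrK.
    * move=> i; rewrite /= in_itv /= !mxE.
      have r : x ord0 i / t \is Num.real by exact: num_real.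
      have h1 := real_floor_le r; have h2 := real_floorD1_gt r.
      set f := ((Num.floor _)%:~R : R) in h1 h2 *.
      have a1 : t * f <= x ord0 i by move: h1; rewrite ler_pdivlMr // mulrC.
      have a2 : x ord0 i < t * f + t.
        by move: h2; rewrite intrD ltr_pdivrMr // mulrDl mul1r mulrC.
      by apply/andP; split; lra.
    * by move=> i; rewrite mxE; eexists.
- apply/seteqP; split => x; last by move=> ->.
  move=> [Dx Sx]; apply/rowP => i; rewrite mxE.
  have [z ez] := Dx i.
  apply: contrapT => /eqP xn0; apply: tnb.
  have zn0 : z%:~R != 0 :> R by apply: contraNneq xn0 => h; rewrite ez h mulr0.
  exists x, i, z; split => //; left.
  by rewrite ez mulfK.
- apply/seteqP; split => x; last first.
    move=> ->; split => // y Dy; exists 0.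
    by rewrite /inner big1 // => j _; rewrite mxE mulr0.
  move=> [Dx Sx]; apply/rowP => i; rewrite mxE.
  pose y := \row_j (if j == i then t else 0) : 'rV[R]_d.
  have Dy : D y.
    move=> j; exists (j == i)%:R; rewrite mxE.
    by case: (j == i); rewrite ?mulr1 ?mulr0.
  have [z ez] := Dx y Dy.
  have ei : inner y x = t * x ord0 i.
    rewrite /inner (bigD1 i) //= mxE eqxx big1 ?addr0 // => j /negbTE ji.
    by rewrite mxE ji mul0r.
  apply: contrapT => /eqP xn0; apply: tnb.
  exists x, i, z; split => //; right.
  by rewrite -ez ei mulfK.
Qed.
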